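(* Let $A$ be a real $2\times 2$ matrix and $B$ a real $1\times 2$ matrix, and let $\mathrm{NT}=\{\vec{x}\in\mathbb{R}^2 : BA^k\vec{x}>0 \text{ for all integers } k\ge 0\}$. Suppose $\mathrm{NT}\neq\emptyset$, and let $\partial\mathrm{NT}$ denote its topological boundary in $\mathbb{R}^2$. If $\vec{x}\in\partial\mathrm{NT}$ and $B\vec{x}\neq 0$, then $A\vec{x}\in\partial\mathrm{NT}$.
   Context: $\mathrm{NT}$ is the non-termination set of the loop ''while $(B\vec{x}>0)$ $\{\vec{x}:=A\vec{x}\}$'', i.e. the set of inputs on which the loop never terminates. *)

(* Defs.v *)
From Stdlib Require Import Reals.
Open Scope R_scope.

Record Mat2 := mkMat2 { m11 : R; m12 : R; m21 : R; m22 : R }.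
Record Row2 := mkRow2 { r1 : R; r2 : R }.
Definition Vec2 := (R * R)%type.

Definition mat2_mul (A C : Mat2) : Mat2 :=
  mkMat2 (m11 A * m11 C + m12 A * m21 C) (m11 A * m12 C + m12 A * m22 C)
         (m21 A * m11 C + m22 A * m21 C) (m21 A * m12 C + m22 A * m22 C).

Definition mat2_id : Mat2 := mkMat2 1 0 0 1.

Fixpoint mat2_pow (A : Mat2) (k : nat) : Mat2 :=
  match k with
  | O => mat2_id
  | S k' => mat2_mul A (mat2_pow A k')
  end.

Definition mat2_app (A : Mat2) (x : Vec2) : Vec2 :=
  (m11 A * fst x + m12 A * snd x, m21 A * fst x + m22 A * snd x).

Definition row2_app (B : Row2) (x : Vec2) : R := r1 B * fst x + r2 B * snd x.

Definition NT (A : Mat2) (B : Row2) (x : Vec2) : Prop :=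
  forall k : nat, row2_app B (mat2_app (mat2_pow A k) x) > 0.

Definition dist2 (x y : Vec2) : R :=
  sqrt ((fst x - fst y) ^ 2 + (snd x - snd y) ^ 2).

Definition in_closure (S : Vec2 -> Prop) (x : Vec2) : Prop :=
  forall eps, eps > 0 -> exists y, S y /\ dist2 x y < eps.

Definition in_interior (S : Vec2 -> Prop) (x : Vec2) : Prop :=
  exists eps, eps > 0 /\ forall y, dist2 x y < eps -> S y.

Definition in_boundary (S : Vec2 -> Prop) (x : Vec2) : Prop :=
  in_closure S x /\ ~ in_interior S x.

(* Main.v *)
Require Import Defs.
From Stdlib Require Import Reals Lra Psatz.
Open Scope R_scope.

Lemma app_mul M N x : mat2_app (mat2_mul M N) x = mat2_app M (mat2_app N x).
Proof. destruct M, N, x; unfold mat2_app, mat2_mul; simpl; f_equal; ring. Qed.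

Lemma app_id x : mat2_app mat2_id x = x.
Proof. destruct x; unfold mat2_app, mat2_id; simpl; f_equal; ring. Qed.

Lemma pow_comm A k y :
  mat2_app (mat2_pow A k) (mat2_app A y) = mat2_app A (mat2_app (mat2_pow A k) y).
Proof.
  induction k; simpl.
  - rewrite !app_id; reflexivity.
  - rewrite !app_mul, IHk. reflexivity.
Qed.

Lemma NT_A A B y : NT A B y -> NT A B (mat2_app A y).
Proof.
  intros H k. rewrite pow_comm. specialize (H (S k)). simpl in H.
  rewrite app_mul in H. exact H.
Qed.

Lemma NT_back A B y : row2_app B y > 0 -> NT A B (mat2_app A y) -> NT A B y.
Proof.
  intros H0 H k. destruct k; simpl.
  - rewrite app_id. exact H0.
  - rewrite app_mul, <- pow_comm. apply H.
Qed.

Lemma coord1 x y : Rabs (fst x - fst y) <= dist2 x y.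
Proof.
  unfold dist2. rewrite <- sqrt_Rsqr_abs. apply sqrt_le_1_alt.
  unfold Rsqr. simpl. pose proof (pow2_ge_0 (snd x - snd y)); pose proof (pow2_ge_0 (fst x - fst y)); simpl in *; lra.
Qed.

Lemma coord2 x y : Rabs (snd x - snd y) <= dist2 x y.
Proof.
  unfold dist2. rewrite <- sqrt_Rsqr_abs. apply sqrt_le_1_alt.
  unfold Rsqr. simpl. pose proof (pow2_ge_0 (snd x - snd y)); pose proof (pow2_ge_0 (fst x - fst y)); simpl in *; lra.
Qed.

Lemma dist_le x y : dist2 x y <= Rabs (fst x - fst y) + Rabs (snd x - snd y).
Proof.
  unfold dist2.
  set (a := fst x - fst y). set (b := snd x - snd y).
  rewrite <- (sqrt_square (Rabs a + Rabs b)).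
  2:{ pose proof (Rabs_pos a); pose proof (Rabs_pos b); lra. }
  apply sqrt_le_1_alt.
  pose proof (Rabs_pos a); pose proof (Rabs_pos b).
  assert (a ^ 2 = Rabs a * Rabs a) by (rewrite <- Rabs_mult, Rabs_right; [ring| nra]).
  assert (b ^ 2 = Rabs b * Rabs b) by (rewrite <- Rabs_mult, Rabs_right; [ring| nra]).
  nra.
Qed.

Lemma lin_bound p q a b d :
  Rabs a <= d -> Rabs b <= d -> Rabs (p*a+q*b) <= (Rabs p + Rabs q)*d.
Proof.
  intros Ha Hb. eapply Rle_trans. apply Rabs_triang.
  rewrite !Rabs_mult. pose proof (Rabs_pos p); pose proof (Rabs_pos q).
  nra.
Qed.

Definition Kc (A : Mat2) := Rabs (m11 A) + Rabs (m12 A) + Rabs (m21 A) + Rabs (m22 A).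
Definition Cc (B : Row2) := Rabs (r1 B) + Rabs (r2 B).

Lemma Kc_pos A : 0 <= Kc A.
Proof. unfold Kc. pose proof (Rabs_pos (m11 A)); pose proof (Rabs_pos (m12 A));
  pose proof (Rabs_pos (m21 A)); pose proof (Rabs_pos (m22 A)); lra. Qed.
Lemma Cc_pos B : 0 <= Cc B.
Proof. unfold Cc. pose proof (Rabs_pos (r1 B)); pose proof (Rabs_pos (r2 B)); lra. Qed.

Lemma A_lip A x y : dist2 (mat2_app A x) (mat2_app A y) <= Kc A * dist2 x y.
Proof.
  eapply Rle_trans. apply dist_le.
  pose proof (coord1 x y); pose proof (coord2 x y).
  destruct A as [a b c d], x as [x1 x2], y as [y1 y2]. unfold mat2_app, Kc in *; simpl in *.
  replace (a * x1 + b * x2 - (a * y1 + b * y2)) with (a*(x1-y1)+b*(x2-y2)) by ring.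
  replace (c * x1 + d * x2 - (c * y1 + d * y2)) with (c*(x1-y1)+d*(x2-y2)) by ring.
  pose proof (lin_bound a b _ _ _ H H0). pose proof (lin_bound c d _ _ _ H H0). lra.
Qed.

Lemma B_lip B x y : Rabs (row2_app B x - row2_app B y) <= Cc B * dist2 x y.
Proof.
  pose proof (coord1 x y); pose proof (coord2 x y).
  destruct B as [a b], x as [x1 x2], y as [y1 y2]. unfold row2_app, Cc in *; simpl in *.
  replace (a * x1 + b * x2 - (a * y1 + b * y2)) with (a*(x1-y1)+b*(x2-y2)) by ring.
  apply lin_bound; auto.
Qed.

Lemma small K d e : 0 <= K -> 0 <= d -> 0 < e -> d < e / (K+1) -> K * d < e.
Proof.
  intros HK Hd He H.
  assert (d * (K+1) < e).
  { apply (Rmult_lt_compat_r (K+1)) in H; [|lra].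
    replace (e / (K+1) * (K+1)) with e in H by (field; lra). exact H. }
  nra.
Qed.

Theorem lemma1 (A : Mat2) (B : Row2) (x : Vec2) :
  (exists y : Vec2, NT A B y) ->
  in_boundary (NT A B) x ->
  row2_app B x <> 0 ->
  in_boundary (NT A B) (mat2_app A x).
Proof.
  intros _ [Hcl Hint] HB.
  pose proof (Kc_pos A) as HK. pose proof (Cc_pos B) as HC.
  split.
  - intros eps Heps.
    destruct (Hcl (eps / (Kc A + 1))) as [y [Hy Hd]].
    { apply Rdiv_lt_0_compat; lra. }
    exists (mat2_app A y). split. apply NT_A; auto.
    pose proof (A_lip A x y). pose proof (sqrt_pos ((fst x - fst y) ^ 2 + (snd x - snd y) ^ 2)).
    pose proof (small (Kc A) (dist2 x y) eps HK H0 Heps Hd). lra.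
  - intros [eps [Heps Hball]]. apply Hint.
    assert (Hpos : row2_app B x > 0).
    { destruct (Rtotal_order (row2_app B x) 0) as [Hn|[Hz|Hp]]; [|contradiction|exact Hp].
      exfalso.
      destruct (Hcl (- row2_app B x / (Cc B + 1))) as [y [Hy Hd]].
      { apply Rdiv_lt_0_compat; lra. }
      pose proof (B_lip B x y). pose proof (sqrt_pos ((fst x - fst y) ^ 2 + (snd x - snd y) ^ 2)).
      pose proof (small (Cc B) (dist2 x y) (- row2_app B x) HC H0 ltac:(lra) Hd).
      specialize (Hy 0%nat). simpl in Hy. rewrite app_id in Hy.
      pose proof (Rle_abs (row2_app B y - row2_app B x)) as Hab. rewrite Rabs_minus_sym in Hab. lra. }
    exists (Rmin (eps / (Kc A + 1)) (row2_app B x / (Cc B + 1))).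
    split.
    { apply Rmin_pos; apply Rdiv_lt_0_compat; lra. }
    intros y Hd.
    pose proof (Rmin_l (eps / (Kc A + 1)) (row2_app B x / (Cc B + 1))).
    pose proof (Rmin_r (eps / (Kc A + 1)) (row2_app B x / (Cc B + 1))).
    pose proof (sqrt_pos ((fst x - fst y) ^ 2 + (snd x - snd y) ^ 2)).
    apply NT_back.
    + pose proof (B_lip B x y).
      pose proof (small (Cc B) (dist2 x y) (row2_app B x) HC H1 Hpos ltac:(lra)).
      pose proof (Rle_abs (row2_app B x - row2_app B y)). lra.
    + apply Hball. pose proof (A_lip A x y).
      pose proof (small (Kc A) (dist2 x y) eps HK H1 Heps ltac:(lra)). lra.
Qed.
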